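(* Suppose the cost norm is $\|\cdot\|=\|\cdot\|_2$, and the Margin-without-intercept assumption and Boundedness hold. For agents $A_0,\dots,A_T\in\mathcal{A}$, let $(y_t,b_t)$ be generated by the projected strategic perceptron with $\mathbb{L}=\mathbb{R}^d\times\{0\}$ and $\gamma=1$ (so $b_t=0$ for all $t$). Then $$\sum_{t\in\mathcal{M}_T}L_{\mathrm{hinge}}\Big(\big(\tfrac{y_*}{d_*\|y_*\|_2},0\big);(s(A_t,y_t,0),1),\ell(A_t)\Big)\le0,$$ and consequently $|\mathcal{M}_T|\le\frac{(D+2/c)^2+1}{d_*^2}$.
   Context: Setting: $\mathcal{A}\subseteq\mathbb{R}^d$, labels $\ell(A)\in\{\pm1\}$; $\operatorname{sign}(0)=+1$; cost constant $c>0$; norm $\|\cdot\|_2$, $v(y)=y/\|y\|_2$ for $y\ne0$, $v(0)=0$. Predicted label $\hat\ell(x,y,b)=\operatorname{sign}(y^\top x+b-2\|y\|_2/c)$. Response: for $y\ne0$, $r(A,y,b)=A+(\tfrac2c-\tfrac{y^\top A+b}{\|y\|_2})v(y)$ if $0\le\tfrac{y^\top A+b}{\|y\|_2}<\tfrac2c$, else $A$. Proxy: for $y\ne0$, $s(A,y,b)=A-\tfrac{y^\top A+b}{\|y\|_2}v(y)$ if $0\le\tfrac{y^\top A+b}{\|y\|_2}<\tfrac2c$ and $\ell(A)=-1$; $=A+(\tfrac2c-\tfrac{y^\top A+b}{\|y\|_2})v(y)$ if the range condition holds and $\ell(A)=+1$; $=A$ otherwise; $r(A,0,b)=s(A,0,b)=A$.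 Margin-without-intercept assumption: $d_*:=\max_{y\ne0}\min_{A\in\mathcal{A}}\ell(A)\frac{y^\top A}{\|y\|_2}$ is attained at some $y_*\ne0$ and $d_*>0$. Boundedness: $D:=\sup_{A\in\mathcal{A}}\|A\|_2<\infty$. Hinge loss $L_{\mathrm{hinge}}(q;\xi,\ell)=\max\{0,1-\ell q^\top\xi\}$. Projected strategic perceptron with closed convex cone $\mathbb{L}$ and stepsize $\gamma$: $q_0=(y_0,b_0)=(0,0)$; for $t=0,\dots,T$: agent $A_t$ is shown $(y_t,b_t)$, responds $r(A_t,y_t,b_t)$, is predicted $\hat\ell(r(A_t,y_t,b_t),y_t,b_t)$; with $\xi_t=(s(A_t,y_t,b_t),1)$, $z_{t+1}=q_t+\gamma\ell(A_t)\xi_t$ on a mistake, else $z_{t+1}=q_t$; $q_{t+1}=(y_{t+1},b_{t+1})=\Pi_{\mathbb{L}}(z_{t+1})$. Mistake set $\mathcal{M}_T=\{t\in\{0,\dots,T\}:\hat\ell(r(A_t,y_t,b_t),y_t,b_t)\ne\ell(A_t)\}$. *)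

(* Defs.v *)
From HB Require Import structures.
From mathcomp Require Import all_boot all_order all_algebra.
From mathcomp Require Import reals.
Set Implicit Arguments. Unset Strict Implicit. Unset Printing Implicit Defensive.
Import Order.TTheory GRing.Theory Num.Theory.
Local Open Scope ring_scope.

Section StrategicPerceptron.
Variables (R : realType) (d : nat).
Notation vec := 'rV[R]_d.

Definition dotv (u v : vec) : R := \sum_(i < d) u 0 i * v 0 i.
Definition norm2 (u : vec) : R := Num.sqrt (dotv u u).

Definition vdir (y : vec) : vec := if y == 0 then 0 else (norm2 y)^-1 *: y.

Definition sgn (x : R) : R := if 0 <= x then 1 else -1.

Definition pred_label (c : R) (x y : vec) (b : R) : R :=
  sgn (dotv y x + b - 2 * norm2 y / c).

Definition resp (c : R) (A y : vec) (b : R) : vec :=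
  if y == 0 then A else
  let m := (dotv y A + b) / norm2 y in
  if (0 <= m) && (m < 2 / c) then A + (2 / c - m) *: vdir y else A.

Definition proxy (c : R) (ell : vec -> R) (A y : vec) (b : R) : vec :=
  if y == 0 then A else
  let m := (dotv y A + b) / norm2 y in
  if (0 <= m) && (m < 2 / c) then
    (if ell A == -1 then A - m *: vdir y
     else if ell A == 1 then A + (2 / c - m) *: vdir y else A)
  else A.

Definition dotq (q xi : vec * R) : R := dotv q.1 xi.1 + q.2 * xi.2.

Definition hinge (q xi : vec * R) (l : R) : R := Num.max 0 (1 - l * dotq q xi).

Definition is_mistake (c : R) (ell : vec -> R) (A : vec) (q : vec * R) : bool :=
  pred_label c (resp c A q.1 q.2) q.1 q.2 != ell A.

Fixpoint perceptron_state (c : R) (ell : vec -> R) (agents : nat -> vec)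
    (proj : vec * R -> vec * R) (gam : R) (t : nat) : vec * R :=
  match t with
  | 0%N => (0, 0)
  | t'.+1 =>
    let q := perceptron_state c ell agents proj gam t' in
    let A := agents t' in
    let xi := (proxy c ell A q.1 q.2, 1) in
    let z := if is_mistake c ell A q
             then (q.1 + (gam * ell A) *: xi.1, q.2 + gam * ell A * xi.2)
             else q in
    proj z
  end.

(* Euclidean projection onto the cone L = R^d x {0} *)
Definition proj_nointercept (z : vec * R) : vec * R := (z.1, 0).

Definition margin (ell : vec -> R) (y A : vec) : R := ell A * dotv y A / norm2 y.

(* Margin-without-intercept assumption: d_* = max_{y<>0} inf_{A in Aset} margin,
   attained at ystar <> 0, and d_* > 0. *)
Definition margin_assumption (Aset : vec -> Prop) (ell : vec -> R)
    (ystar : vec) (dstar : R) : Prop :=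
  [/\ ystar != 0,
      (forall A, Aset A -> dstar <= margin ell ystar A),
      (forall y, y != 0 -> forall e : R,
          (forall A, Aset A -> e <= margin ell y A) -> e <= dstar)
    & 0 < dstar].

Definition is_sup_norm (Aset : vec -> Prop) (D : R) : Prop :=
  (forall A, Aset A -> norm2 A <= D) /\
  (forall e : R, (forall A, Aset A -> norm2 A <= e) -> D <= e).

End StrategicPerceptron.

(* Main.v *)
Require Import Defs.
From HB Require Import structures.
From mathcomp Require Import all_boot all_order all_algebra.
From mathcomp Require Import reals.
From mathcomp Require Import ring lra.
Import Order.TTheory GRing.Theory Num.Theory.
Local Open Scope ring_scope.

Section Aux.
Variables (R : realType) (d : nat).
Implicit Types (u v w : 'rV[R]_d) (a : R).

Lemma dotvC u v : dotv u v = dotv v u.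
Proof. by apply: eq_bigr => i _; rewrite mulrC. Qed.

Lemma dotvDr u v w : dotv u (v + w) = dotv u v + dotv u w.
Proof. by rewrite /dotv -big_split; apply: eq_bigr => i _; rewrite mxE mulrDr. Qed.

Lemma dotvZr u a v : dotv u (a *: v) = a * dotv u v.
Proof. by rewrite /dotv mulr_sumr; apply: eq_bigr => i _; rewrite mxE; ring. Qed.

Lemma dotvNr u v : dotv u (- v) = - dotv u v.
Proof. by rewrite -scaleN1r dotvZr mulN1r. Qed.

Lemma dotvDl u v w : dotv (v + w) u = dotv v u + dotv w u.
Proof. by rewrite !(dotvC _ u) dotvDr. Qed.

Lemma dotvZl u a v : dotv (a *: v) u = a * dotv v u.
Proof. by rewrite !(dotvC _ u) dotvZr. Qed.

Lemma dotvNl u v : dotv (- v) u = - dotv v u.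
Proof. by rewrite !(dotvC _ u) dotvNr. Qed.

Lemma dotv0r u : dotv u 0 = 0.
Proof. by rewrite -(scale0r (0 : 'rV[R]_d)) dotvZr mul0r. Qed.

Lemma dotv0l u : dotv 0 u = 0.
Proof. by rewrite dotvC dotv0r. Qed.

Lemma dotv_ge0 u : 0 <= dotv u u.
Proof. by apply: sumr_ge0 => i _; rewrite -expr2 sqr_ge0. Qed.

Lemma dotv_eq0 u : dotv u u = 0 -> u = 0.
Proof.
move=> H; apply/matrixP => i j; rewrite mxE (ord1 i).
have /(_ j isT) := psumr_eq0P (P := predT) (F := fun k => u 0 k * u 0 k)
   (fun k _ => ltac:(by simpl; rewrite -expr2 sqr_ge0)) H.
by move/eqP; rewrite mulf_eq0 orbb => /eqP.
Qed.

Lemma dotv_CS u v : dotv u v ^+ 2 <= dotv u u * dotv v v.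
Proof.
have [v0|vne] := eqVneq (dotv v v) 0.
  by rewrite (dotv_eq0 _ v0) dotv0r dotv0l expr0n /= mulr0.
have vp : 0 < dotv v v by rewrite lt_def vne dotv_ge0.
set w := dotv v v; set p := dotv u v.
have := dotv_ge0 (w *: u - p *: v).
rewrite !(dotvDr, dotvDl, dotvNr, dotvNl, dotvZr, dotvZl) (dotvC v u) -/p -/w => H.
have : 0 <= w * (w * dotv u u - p ^+ 2) by lra.
by rewrite pmulr_rge0 // subr_ge0 mulrC.
Qed.
Lemma norm2_ge0 u : 0 <= norm2 u.
Proof. exact: sqrtr_ge0. Qed.

Lemma norm2_sq u : norm2 u ^+ 2 = dotv u u.
Proof. by rewrite sqr_sqrtr // dotv_ge0. Qed.


Lemma norm2_gt0 u : u != 0 -> 0 < norm2 u.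
Proof.
move=> un; rewrite sqrtr_gt0 lt_def dotv_ge0 andbT.
by apply: contra un => /eqP /dotv_eq0 ->.
Qed.

Lemma vdir_props y : y != 0 ->
  [/\ dotv (vdir y) (vdir y) = 1,
      forall u, dotv u (vdir y) = (norm2 y)^-1 * dotv u y &
      dotv y (vdir y) = norm2 y].
Proof.
move=> yn; have np := norm2_gt0 _ yn.
have e : forall u, dotv u (vdir y) = (norm2 y)^-1 * dotv u y.
  by move=> u; rewrite /vdir (negPf yn) dotvZr.
have nz : norm2 y != 0 by rewrite gt_eqF.
split => //; last by rewrite e -norm2_sq; field.
by rewrite e /vdir (negPf yn) dotvZl -norm2_sq; field.
Qed.

Lemma sq_bound A v a (D K : R) : dotv v v = 1 -> norm2 A <= D ->
  -K <= a -> a <= K -> dotv (A + a *: v) (A + a *: v) <= (D + K) ^+ 2.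
Proof.
move=> vv AD a1 a2.
rewrite !(dotvDr, dotvDl, dotvZr, dotvZl) vv (dotvC v A).
have cs := dotv_CS A v; rewrite vv mulr1 -norm2_sq in cs.
have n0 := norm2_ge0 A.
rewrite -norm2_sq.
set x := dotv A v in cs *; set n := norm2 A in cs n0 AD *.
have x1 : x <= n by nra.
have x2 : - n <= x by nra.
nra.
Qed.


Lemma step (c D dstar : R) (ell : 'rV[R]_d -> R) (ystar A y : 'rV[R]_d) :
  0 < c -> (ell A = 1 \/ ell A = -1) -> ystar != 0 ->
  dstar <= margin ell ystar A -> norm2 A <= D -> 0 <= dotv ystar y ->
  pred_label c (resp c A y 0) y 0 != ell A ->
  [/\ dstar * norm2 ystar <= ell A * dotv ystar (proxy c ell A y 0),
      ell A * dotv y (proxy c ell A y 0) <= 0 &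
      dotv (proxy c ell A y 0) (proxy c ell A y 0) <= (D + 2 / c) ^+ 2].
Proof.
move=> c0 hl ys0 hm hD hy.
have nsp := norm2_gt0 _ ys0.
have hm' : dstar * norm2 ystar <= ell A * dotv ystar A.
  by move: hm; rewrite /margin ler_pdivlMr.
have c2 : 0 < 2 / c by rewrite divr_gt0.
have n0 := norm2_ge0 A.
have hAA : dotv A A <= (D + 2 / c) ^+ 2.
  rewrite -norm2_sq; nra.
rewrite /pred_label /resp /proxy.
have [->|yn] := eqVneq y 0.
  rewrite dotv0l mulr0 => _; split => //.
rewrite !addr0.
have [vv ve vy] := vdir_props _ yn.
have np := norm2_gt0 _ yn.
set n := norm2 y in np vy ve *.
set m := dotv y A / n.
have hym : dotv y A = m * n by rewrite /m mulfVK // gt_eqF.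
case: ifP => [/andP [m0 m2] | hr].
  rewrite !(dotvDr, dotvZr) vy hym.
  have -> : m * n + (2 / c - m) * n - 2 * n / c = 0 by field; rewrite gt_eqF.
  rewrite /sgn lexx.
  case: hl => hl; rewrite hl; first by rewrite eqxx.
  move=> _; rewrite eqxx; rewrite hl in hm'.
  split.
  - rewrite dotvDr dotvNr dotvZr ve.
    have ni : 0 <= n^-1 by rewrite invr_ge0 ltW.
    have := mulr_ge0 (mulr_ge0 m0 ni) hy.
    move: hm'; lra.
  - by rewrite dotvDr dotvNr dotvZr vy hym; lra.
  - rewrite -scaleNr; apply: sq_bound => //; lra.
have hr' : ~~ ((0 <= m) && (m < 2 / c)) by rewrite hr.
rewrite /sgn /= => hmis; split => //.
have c3 : 0 <= 2 * n / c by rewrite mulr_ge0 ?invr_ge0 ?ltW ?mulr_gt0.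
case: hl => hl; rewrite hl in hmis *.
  move: hmis; case: ifP; first by rewrite eqxx.
  rewrite subr_ge0 => /negbT; rewrite -ltNge => h _.
  suff : m < 0 by rewrite hym; nra.
  move: hr'; rewrite negb_and -ltNge -leNgt => /orP [] //.
  move=> hm2; exfalso; move: h hm2; rewrite hym /m; nra.
move: hmis; case: ifP; last by rewrite eqxx.
rewrite subr_ge0 => h _; lra.
Qed.



End Aux.

Theorem mainTheorem17 (R : realType) (d : nat) (Aset : 'rV[R]_d -> Prop)
    (ell : 'rV[R]_d -> R) (c : R) (ystar : 'rV[R]_d) (dstar D : R)
    (agents : nat -> 'rV[R]_d) (T : nat) :
  (forall A, Aset A -> ell A = 1 \/ ell A = -1) ->
  0 < c ->
  margin_assumption Aset ell ystar dstar ->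
  is_sup_norm Aset D ->
  (forall t, (t <= T)%N -> Aset (agents t)) ->
  let q := perceptron_state c ell agents (@proj_nointercept R d) 1 in
  let mistake t := is_mistake c ell (agents t) (q t) in
  (\sum_(t < T.+1 | mistake t)
      hinge ((norm2 ystar * dstar)^-1 *: ystar, 0)
            (proxy c ell (agents t) (q t).1 0, 1) (ell (agents t)) <= 0)
  /\ (#|[set t : 'I_T.+1 | mistake t]|%:R
        <= ((D + 2 / c) ^+ 2 + 1) / dstar ^+ 2).
Proof.
move=> hl c0 [ys0 hmarg _ dpos] [hD _] hA q mistake.
set K := (D + 2 / c) ^+ 2.
pose S t := \sum_(k < t) ((mistake k)%:R : R).
have nsp := @norm2_gt0 R d _ ys0.
have stepq : forall t, q t.+1 = proj_nointercept (if mistake t then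
   ((q t).1 + (1 * ell (agents t)) *: proxy c ell (agents t) (q t).1 (q t).2,
    (q t).2 + 1 * ell (agents t) * 1) else q t) by [].
have inv : forall t, (t <= T.+1)%N ->
  [/\ (q t).2 = 0, S t * dstar * norm2 ystar <= dotv ystar (q t).1
    & dotv (q t).1 (q t).1 <= S t * K].
  elim => [|t IH] ht.
    by rewrite /S big_ord0 /= dotv0r dotv0l !mul0r.
  have [hb h1 h2] := IH (ltnW ht).
  have At := hA t ht.
  have hSt : S t.+1 = S t + (mistake t)%:R by rewrite /S big_ord_recr.
  have S0 : 0 <= S t by apply: sumr_ge0 => k _; apply: ler0n.
  have hy : 0 <= dotv ystar (q t).1.
    apply: le_trans h1; apply: mulr_ge0; [apply: mulr_ge0 => //; exact: ltW | exact: norm2_ge0].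
  rewrite stepq hSt.
  have [mt|mt] := boolP (mistake t); last first.
    by rewrite /= addr0; split.
  have mt' := mt; rewrite /mistake /is_mistake hb in mt'.
  have [s1 s2 s3] := @step R d c D dstar ell ystar (agents t) (q t).1
    c0 (hl _ At) ys0 (hmarg _ At) (hD _ At) hy mt'.
  rewrite hb /= mul1r.
  set s := proxy c ell (agents t) (q t).1 0 in s1 s2 s3 *.
  set y := (q t).1 in h1 h2 hy s1 s2 *.
  set e := ell (agents t) in s1 s2 *.
  have e2 : e ^+ 2 = 1 by case: (hl _ At); rewrite -/e => ->; rewrite ?sqrrN expr1n.
  split => //.
  - rewrite dotvDr dotvZr; lra.
  - rewrite !(dotvDr, dotvDl, dotvZr, dotvZl) (@dotvC _ _ s y) -/K in s3 *.
    have : e * (e * dotv s s) = dotv s s by rewrite mulrA -expr2 e2 mul1r.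
    lra.
have [_ hF1 hF2] := inv T.+1 (leqnn _).
split.
  apply: sumr_le0 => t mt.
  have htT : (t <= T)%N by rewrite -ltnS.
  have At := hA t htT.
  have [hb h1 _] := inv t (ltnW (ltn_ord t)).
  have S0 : 0 <= S t by apply: sumr_ge0 => k _; apply: ler0n.
  have hy : 0 <= dotv ystar (q t).1.
    apply: le_trans h1; apply: mulr_ge0; [apply: mulr_ge0 => //; exact: ltW | exact: norm2_ge0].
  have mt' := mt; rewrite /mistake /is_mistake hb in mt'.
  have [s1 _ _] := @step R d c D dstar ell ystar (agents t) (q t).1
    c0 (hl _ At) ys0 (hmarg _ At) (hD _ At) hy mt'.
  rewrite /hinge /dotq /= mul0r addr0 dotvZl ge_max lexx /=.
  set P := norm2 ystar * dstar.
  have Pp : 0 < P by rewrite mulr_gt0.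
  rewrite subr_le0 mulrCA.
  have -> : 1 = P^-1 * (dstar * norm2 ystar) by rewrite [dstar * _]mulrC mulVf // gt_eqF.
  by rewrite ler_wpM2l // invr_ge0 ltW.
have cardE : (#|[set t : 'I_T.+1 | mistake t]|%:R : R) = S T.+1.
  rewrite /S -sum1_card natr_sum big_mkcond /=; apply: eq_bigr => k _.
  by rewrite inE; case: (mistake k).
rewrite -/K.
have d2 : 0 < dstar ^+ 2 by rewrite exprn_gt0.
rewrite ler_pdivlMr //.
have n0 := @norm2_ge0 _ _ ystar.
have cs := @dotv_CS _ _ ystar (q T.+1).1.
rewrite -norm2_sq in cs.
rewrite -cardE in hF1 hF2.
move: hF1 hF2 cs.
set a := dotv ystar (q T.+1).1; set w := dotv (q T.+1).1 (q T.+1).1.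
set n := norm2 ystar.
case: #|_| => [|N] hF1 hF2 cs.
  by rewrite mul0r addr_ge0 // /K sqr_ge0.
set M := (N.+1)%:R : R.
have M1 : 1 <= M by rewrite /M ler1n.
have e1 : (M * dstar * n) ^+ 2 <= a ^+ 2.
  have h0 : 0 <= M * dstar * n by rewrite !mulr_ge0 // ?ltW //; lra.
  nra.
have e2 : (M * dstar) ^+ 2 <= w.
  have : n ^+ 2 * (M * dstar) ^+ 2 <= n ^+ 2 * w.
    apply: le_trans cs; apply: le_trans e1; rewrite le_eqVlt; apply/orP; left; apply/eqP; ring.
  by rewrite ler_pM2l // exprn_gt0.
nra.
Qed.
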